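(* Let $(\mathcal D,\varphi,\mathrm{Fil}^\bullet)$ be a filtered $\varphi$-module over $\mathbb Q_p$ and let $M$ be a $\mathbb Z_p$-lattice in $\mathcal D$. Then $M$ is strongly divisible if and only if $M$ admits a $\mathbb Z_p$-basis $\mathcal B$ adapted to the filtered $\varphi$-module such that $\varphi\circ t_{HT,\mathcal B}^{-1}(M)=M$.
   Context: A filtered $\varphi$-module over $\mathbb Q_p$ is a finite-dimensional $\mathbb Q_p$-vector space $\mathcal D$ of dimension $d$ with a bijective linear map $\varphi$ and a decreasing, exhaustive, separated filtration $(\mathrm{Fil}^i\mathcal D)_{i\in\mathbb Z}$ by subspaces. Its Hodge–Tate weights $t_{HT,1}\le\dots\le t_{HT,d}$ are the integers $i$ with $\mathrm{Fil}^i\mathcal D\ne\mathrm{Fil}^{i+1}\mathcal D$, each counted $\dim\mathrm{Fil}^i\mathcal D/\mathrm{Fil}^{i+1}\mathcal D$ times. For $v\in\mathcal D$, $t_H(v)$ is the largest $j$ with $v\in\mathrm{Fil}^j\mathcal D$. A basis $(v_1,\dots,v_d)$ is adapted to the filtration if $v_i\in\mathrm{Fil}^{t_{HT,i}}\mathcal D$ for all $i$. For a lattice $M$, let $s_1\le\dots\le s_d$ be the $p$-adic valuations of the elementary divisors of $\varphi$ on $M$ (there are $\mathbb Z_p$-bases $(w_i),(w_i')$ of $M$ with $\varphi(w_i)=p^{s_i}w_i'$); a $\mathbb Z_p$-basis $(v_1,\dots,v_d)$ of $M$ is adapted to $\varphi$ if $(p^{-s_i}\varphi(v_i))_i$ is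 again a $\mathbb Z_p$-basis of $M$; it is adapted to the filtered $\varphi$-module if it is adapted both to $\varphi$ and to the filtration. $M$ is strongly divisible if it admits a basis adapted to the filtered $\varphi$-module and $(s_1,\dots,s_d)=(t_{HT,1},\dots,t_{HT,d})$ (equality of the Smith polygon of $\varphi$ on $M$ and the Hodge–Tate polygon). For a basis $\mathcal B=(v_i)$ adapted to the filtration, $t_{HT,\mathcal B}$ is the linear map with $t_{HT,\mathcal B}(v_i)=p^{t_H(v_i)}v_i$. *)

(* Defs.v *)
From HB Require Import structures.
From mathcomp Require Import all_boot all_order all_algebra.
Set Implicit Arguments. Unset Strict Implicit. Unset Printing Implicit Defensive.
Import Order.TTheory GRing.Theory Num.Theory.
Local Open Scope ring_scope.

(* Q_p is modelled as an abstract field K with a discrete valuation v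
   (values on nonzero elements) such that K is complete, p is a uniformizer
   (v p = 1) and the residue field is F_p; these properties characterize Q_p
   up to (valuation-preserving) isomorphism. Z_p = {x | x = 0 or v x >= 0}. *)

Section Defs.
Variable K : fieldType.
Variable v : K -> int.
Variable p : nat.

Definition pK : K := p%:R.

(* x \in p^n Z_p *)
Definition inPO (n : int) (x : K) : bool := (x == 0) || (n <= v x).
Definition integral (x : K) : bool := inPO 0 x.

Record is_Qp : Prop := {
  Qp_prime : prime p;
  Qp_p_neq0 : pK != 0;
  Qp_vM : forall x y, x != 0 -> y != 0 -> v (x * y) = v x + v y;
  Qp_vD : forall x y, x != 0 -> y != 0 -> x + y != 0 ->
            v x <= v (x + y) \/ v y <= v (x + y);
  Qp_vp : v pK = 1;
  Qp_residue : forall x, integral x ->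
            exists2 k : nat, (k < p)%N & inPO 1 (x - k%:R);
  Qp_complete : forall u : nat -> K,
      (forall n : int, exists N, forall m k, (N <= m)%N -> (N <= k)%N ->
          inPO n (u m - u k)) ->
      exists l, forall n : int, exists N, forall m, (N <= m)%N -> inPO n (u m - l)
}.

Variable d : nat.

(* D = K^d (row vectors); phi acts by x |-> x *m Phi; subspaces are row spaces. *)
Definition filtration (Fil : int -> 'M[K]_d) : Prop :=
  [/\ (forall i, (Fil (i + 1)%R <= Fil i)%MS),
      (forall x : 'rV[K]_d, exists i, (x <= Fil i)%MS) &
      (forall x : 'rV[K]_d, (forall i, (x <= Fil i)%MS) -> x = 0)].

Definition filtered_phi_module (Phi : 'M[K]_d) (Fil : int -> 'M[K]_d) : Prop :=
  Phi \in unitmx /\ filtration Fil.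

Definition isHT (Fil : int -> 'M[K]_d) (t : 'I_d -> int) : Prop :=
  (forall i j : 'I_d, (i <= j)%N -> t i <= t j) /\
  (forall j : int, #|[set i | t i == j]| = (\rank (Fil j) - \rank (Fil (j + 1)%R))%N).

Definition tH (Fil : int -> 'M[K]_d) (x : 'rV[K]_d) (j : int) : Prop :=
  (x <= Fil j)%MS /\ forall k, (x <= Fil k)%MS -> k <= j.

Definition integral_mx m n (c : 'M[K]_(m, n)) : Prop :=
  forall i j, integral (c i j).

Definition span_Zp (B : 'M[K]_d) (x : 'rV[K]_d) : Prop :=
  exists c : 'rV[K]_d, integral_mx c /\ x = c *m B.

Definition isZpBasis (M : 'rV[K]_d -> Prop) (B : 'M[K]_d) : Prop :=
  B \in unitmx /\ forall x, M x <-> span_Zp B x.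

Definition lattice (M : 'rV[K]_d -> Prop) : Prop := exists B, isZpBasis M B.

Definition isSmith (M : 'rV[K]_d -> Prop) (Phi : 'M[K]_d) (s : 'I_d -> int) : Prop :=
  (forall i j : 'I_d, (i <= j)%N -> s i <= s j) /\
  exists W W', [/\ isZpBasis M W, isZpBasis M W' &
                   forall i, row i W *m Phi = pK ^ (s i) *: row i W'].

Definition adapted_phi M Phi (B : 'M[K]_d) : Prop :=
  isZpBasis M B /\ exists s, isSmith M Phi s /\
     isZpBasis M (\matrix_(i < d) (pK ^ (- s i) *: (row i B *m Phi))).

Definition adapted_fil (Fil : int -> 'M[K]_d) (B : 'M[K]_d) : Prop :=
  exists t, isHT Fil t /\ forall i, (row i B <= Fil (t i))%MS.

Definition adapted M Phi Fil B : Prop := adapted_phi M Phi B /\ adapted_fil Fil B.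

Definition strongly_divisible M Phi Fil : Prop :=
  (exists B, adapted M Phi Fil B) /\
  exists s t, [/\ isSmith M Phi s, isHT Fil t & s = t].

(* matrix of t_{HT,B}: row i B |-> p^(h i) row i B, where h i = t_H(row i B) *)
Definition tHT_mx (B : 'M[K]_d) (h : 'I_d -> int) : 'M[K]_d :=
  invmx B *m diag_mx (\row_i (pK ^ (h i))) *m B.

End Defs.

(* Main.v *)
Require Import Defs.
From mathcomp Require Import all_boot all_order all_algebra.
From mathcomp Require Import zify ring.
Set Implicit Arguments. Unset Strict Implicit. Unset Printing Implicit Defensive.
Import Order.TTheory GRing.Theory Num.Theory.
Local Open Scope ring_scope.


Lemma sorted_le n (a b : 'I_n -> int) :
  (forall i j : 'I_n, (i <= j)%N -> a i <= a j) ->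
  (forall i j : 'I_n, (i <= j)%N -> b i <= b j) ->
  (forall k, #|[set i | (k <= b i)%R]| <= #|[set i | (k <= a i)%R]|)%N ->
  forall i, b i <= a i.
Proof.
move=> ha hb hc i; rewrite leNgt; apply/negP => lt.
have h1 : [set j | (b i <= a j)%R] \subset [set j : 'I_n | (i < j)%N].
  apply/subsetP => j; rewrite !inE => hj; rewrite ltnNge; apply/negP => ji.
  have := ha _ _ ji; lia.
have h2 : [set j : 'I_n | (i <= j)%N] \subset [set j | (b i <= b j)%R].
  by apply/subsetP => j; rewrite !inE => hj; apply: hb.
have h3 : [set j : 'I_n | (i < j)%N] \proper [set j : 'I_n | (i <= j)%N].
  rewrite properE; apply/andP; split.
    by apply/subsetP => j; rewrite !inE => /ltnW.
  by apply/subsetPn; exists i; rewrite !inE ?leqnn ?ltnn.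
have := hc (b i).
have := subset_leq_card h1; have := subset_leq_card h2; have := proper_card h3.
lia.
Qed.

Lemma sorted_eq n (a b : 'I_n -> int) :
  (forall i j : 'I_n, (i <= j)%N -> a i <= a j) ->
  (forall i j : 'I_n, (i <= j)%N -> b i <= b j) ->
  (forall k, #|[set i | (k <= b i)%R]| = #|[set i | (k <= a i)%R]|)%N ->
  forall i, b i = a i.
Proof.
move=> ha hb hc i; apply/eqP; rewrite eq_le; apply/andP; split.
  by apply: sorted_le => // k; rewrite hc.
by apply: sorted_le => // k; rewrite hc.
Qed.

Section Gen.
Variable K : fieldType.
Lemma colsub_sel m n (f : 'I_m -> 'I_n) : injective f ->
  colsub f (rowsub f (1%:M : 'M[K]_n)) = 1%:M.
Proof. by move=> fi; apply/matrixP => i j; rewrite !mxE (inj_eq fi). Qed.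

Lemma rank_colsub m n n' (g : 'I_n' -> 'I_n) (A : 'M[K]_(m, n)) :
  (\rank (colsub g A) <= \rank A)%N.
Proof. by have := mxrankM_maxl A (colsub g (1%:M : 'M[K]_n)); rewrite mulmx_colsub mulmx1. Qed.

Lemma rank_sel m n (f : 'I_m -> 'I_n) : injective f ->
  \rank (rowsub f (1%:M : 'M[K]_n)) = m.
Proof.
move=> fi; apply/eqP; rewrite eqn_leq rank_leq_row /=.
by have := rank_colsub f (rowsub f (1%:M : 'M[K]_n)); rewrite colsub_sel // mxrank1.
Qed.

Lemma rank_rowsub_unit m n (f : 'I_m -> 'I_n) (B : 'M[K]_n) : injective f ->
  B \in unitmx -> \rank (rowsub f B) = m.
Proof.
by move=> fi Bu; rewrite rowsubE mxrankMfree ?row_free_unit // rank_sel.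
Qed.

End Gen.

Section Fil.
Variable K : fieldType.
Variable d : nat.
Variable Fil : int -> 'M[K]_d.
Hypothesis hF : filtration Fil.

Lemma fil_mono i j : i <= j -> (Fil j <= Fil i)%MS.
Proof.
case: hF => hdec _ _.
move=> hij; have -> : j = i + `|j - i|%N by lia.
elim: (`|j - i|%N) => [|n IH]; first by rewrite addr0.
apply: submx_trans IH; have -> : i + n.+1%:Z = (i + n) + 1 by rewrite -addrA -[n.+1]addn1 PoszD.
exact: hdec.
Qed.

Variable t : 'I_d -> int.
Hypothesis hT : isHT Fil t.

Lemma rank_fil j : \rank (Fil j) = #|[set i | (j <= t i)%R]|.
Proof.
case: hF => hdec _ hsep; case: hT => hsort hcnt.
pose N := (\max_i `|t i|)%N.
pose J : int := (N.+1)%:Z.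
have tJ : forall i, t i < J.
  move=> i; have := @leq_bigmax _ (fun i => `|t i|%N) i; rewrite -/N /J => h.
  have : t i <= `|t i|%N by rewrite abszE ler_norm.
  lia.
have step : forall j, J <= j -> (Fil j <= Fil (j + 1))%MS.
  move=> j' hj'; have := hcnt j'.
  have -> : [set i | t i == j'] = set0.
    by apply/setP => i; rewrite !inE; apply/negbTE; have := tJ i; lia.
  rewrite cards0 => /esym/eqP; rewrite subn_eq0 => hle.
  by rewrite -(mxrank_leqif_sup (hdec j')).2 eqn_leq hle mxrankS.
have up : forall n : nat, (Fil J <= Fil (J + n))%MS.
  elim=> [|n IH]; first by rewrite addr0.
  apply: submx_trans IH _; have -> : J + n.+1%:Z = (J + n) + 1 by rewrite -addrA -[n.+1]addn1 PoszD.
  by apply: step; rewrite lerDl.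
have FJ : Fil J = 0.
  apply/row_matrixP => r; rewrite row0; apply: hsep => i.
  apply: submx_trans (row_sub r (Fil J)) _.
  have [hiJ|hiJ] := leP i J; first exact: fil_mono.
  have -> : i = J + `|i - J|%N by lia.
  exact: up.
have down : forall n : nat, \rank (Fil (J - n%:Z)) = #|[set i | (J - n%:Z <= t i)%R]|.
  elim=> [|n IH].
    rewrite subr0 FJ mxrank0; apply/esym/eqP; rewrite cards_eq0; apply/eqP/setP => i.
    by rewrite !inE; apply/negbTE; have := tJ i; lia.
  have e1 : J - n.+1%:Z + 1 = J - n%:Z by rewrite -[n.+1]addn1 PoszD opprD addrA subrK.
  have := hcnt (J - n.+1%:Z); rewrite e1 => hc.
  have hle : (\rank (Fil (J - n%:Z)) <= \rank (Fil (J - n.+1%:Z)))%N.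
    by rewrite -e1; apply: mxrankS; apply: hdec.
  rewrite -(subnK hle) -hc IH.
  rewrite -(cardsID [set i | t i == J - n.+1%:Z] [set i | (J - n.+1%:Z <= t i)%R]).
  congr (_ + _)%N; apply: eq_card => i; rewrite !inE; first by have [->|] := eqVneq (t i) (J - n.+1%:Z); rewrite ?lexx ?andbF.
  by apply/idP/idP => [h|/andP[h1 h2]]; [apply/andP; split|]; lia.
have [hjJ|hjJ] := leP j J.
  have -> : j = J - (`|J - j|%N)%:Z by lia.
  exact: down.
have : \rank (Fil j) = 0%N.
  by apply/eqP; rewrite -leqn0 -(mxrank0 K d d) -FJ mxrankS // fil_mono // ltW.
move=> ->; apply/esym/eqP; rewrite cards_eq0; apply/eqP/setP => i.
by rewrite !inE; apply/negbTE; have := tJ i; lia.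
Qed.


Lemma not_next (B : 'M[K]_d) : B \in unitmx ->
  (forall i, (row i B <= Fil (t i))%MS) -> forall i, ~~ (row i B <= Fil (t i + 1))%MS.
Proof.
move=> Bu hB i; apply/negP => hi.
set j := t i + 1.
set T := i |: [set l | (j <= t l)%R].
pose fT := fun k : 'I_#|T| => enum_val k.
have fTi : injective fT by apply: enum_val_inj.
have sub : (rowsub fT B <= Fil j)%MS.
  apply/row_subP => k; rewrite row_rowsub.
  have := enum_valP k; rewrite /fT !inE => /orP [/eqP->//|hl].
  exact: submx_trans (hB _) (fil_mono hl).
have := mxrankS sub; rewrite rank_rowsub_unit // rank_fil /T cardsU1 inE.
have nj : ~~ (j <= t i)%R by rewrite /j -ltNge; lia.
by rewrite nj add1n ltnn.
Qed.


End Fil.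

Lemma HT_uniq (K : fieldType) d (Fil : int -> 'M[K]_d) (t t' : 'I_d -> int) :
  filtration Fil -> isHT Fil t -> isHT Fil t' -> forall i, t' i = t i.
Proof.
move=> hF hT hT'; apply: sorted_eq; [by case: hT|by case: hT'|] => k.
by rewrite -!(rank_fil hF).
Qed.


Section Val.
Variable K : fieldType.
Variable v : K -> int.
Variable p : nat.
Hypothesis hQ : is_Qp v p.

Lemma vM (x y : K) : x != 0 -> y != 0 -> v (x * y) = v x + v y.
Proof. move=> x0 y0; have := Qp_vM hQ x0 y0; exact. Qed.
Lemma vD (x y : K) : x != 0 -> y != 0 -> x + y != 0 ->
            v x <= v (x + y) \/ v y <= v (x + y).
Proof. move=> x0 y0 s0; have := Qp_vD hQ x0 y0 s0; exact. Qed.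

Lemma pK_neq0 : pK K p != 0. Proof. exact: Qp_p_neq0 hQ. Qed.

Lemma int_aux (a : int) : a = a + a -> a = 0. Proof. lia. Qed.

Lemma v1 : v 1 = 0.
Proof. have := vM (oner_neq0 K) (oner_neq0 K); rewrite mulr1 => h. exact: int_aux. Qed.

Lemma vV x : x != 0 -> v x^-1 = - v x.
Proof.
move=> x0; have := vM x0 (invr_neq0 x0); rewrite divff // v1 => h; lia.
Qed.

Lemma vN1 : v (-1) = 0.
Proof.
have n1 : (-1 : K) != 0 by rewrite oppr_eq0 oner_neq0.
have := vM n1 n1; rewrite mulrNN mulr1 v1 => h; lia.
Qed.

Lemma vN x : v (- x) = v x.
Proof.
have [->|x0] := eqVneq x 0; first by rewrite oppr0.
have n1 : (-1 : K) != 0 by rewrite oppr_eq0 oner_neq0.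
by rewrite -mulN1r vM // vN1 add0r.
Qed.

Lemma vpX (n : nat) : v (pK K p ^+ n) = n%:Z.
Proof.
elim: n => [|n IH]; first by rewrite expr0 v1.
rewrite exprS vM ?pK_neq0 ?expf_neq0 ?pK_neq0 // IH (Qp_vp hQ). lia.
Qed.

Lemma vpz (n : int) : v (pK K p ^ n) = n.
Proof.
case: n => n; first by rewrite -exprnP vpX.
rewrite NegzE -exprnN vV ?vpX //; last by rewrite expf_neq0 // pK_neq0.
Qed.

Lemma inPO0 n : inPO v n 0. Proof. by rewrite /inPO eqxx. Qed.

Lemma inPOD n x y : inPO v n x -> inPO v n y -> inPO v n (x + y).
Proof.
rewrite /inPO; have [->|x0] := eqVneq x 0; first by rewrite add0r => _ h.
have [->|y0] := eqVneq y 0; first by rewrite addr0 (negPf x0) => h _.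
move=> /= hx hy; have [->|s0] := eqVneq (x + y) 0; first by [].
rewrite /=; case: (vD x0 y0 s0) => h; lia.
Qed.

Lemma inPON n x : inPO v n x -> inPO v n (- x).
Proof. by rewrite /inPO oppr_eq0 vN. Qed.

Lemma inPOB n x y : inPO v n x -> inPO v n y -> inPO v n (x - y).
Proof. by move=> hx hy; apply: inPOD => //; apply: inPON. Qed.

Lemma inPOM a b x y : inPO v a x -> inPO v b y -> inPO v (a + b) (x * y).
Proof.
rewrite /inPO; have [->|x0] := eqVneq x 0; first by rewrite mul0r eqxx.
have [->|y0] := eqVneq y 0; first by rewrite mulr0 eqxx.
rewrite mulf_eq0 (negPf x0) (negPf y0) /= vM // => hx hy; lia.
Qed.

Lemma inPOW a b x : a <= b -> inPO v b x -> inPO v a x.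
Proof. rewrite /inPO => hab /orP [->//|h]; apply/orP; right; lia. Qed.

Lemma inPO_sum n (I : finType) (F : I -> K) :
  (forall i, inPO v n (F i)) -> inPO v n (\sum_i F i).
Proof. move=> h; apply: (big_ind (inPO v n)) => //; [exact: inPO0|exact: inPOD]. Qed.

Lemma inPOpz (n : int) : inPO v n (pK K p ^ n).
Proof. by rewrite /inPO vpz lexx orbT. Qed.

Lemma inPOpzM (n k : int) x : inPO v k (pK K p ^ n * x) -> inPO v (k - n) x.
Proof.
rewrite /inPO mulf_eq0 expfz_eq0 (negPf pK_neq0) andbF /=.
have [->//|x0] := eqVneq x 0.
rewrite /= vM ?vpz // ?expfz_neq0 ?pK_neq0 // => h; lia.
Qed.

Lemma integral1 : integral v 1.
Proof. by rewrite /integral /inPO v1 lexx orbT. Qed.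

Lemma not_inPO1_1 : ~~ inPO v 1 1.
Proof. by rewrite /inPO oner_eq0 v1. Qed.


Lemma inPOp : inPO v 1 (pK K p).
Proof. by rewrite /inPO (Qp_vp hQ) lexx orbT. Qed.

Lemma integralM x y : integral v x -> integral v y -> integral v (x * y).
Proof. by move=> hx hy; have := inPOM hx hy; rewrite addr0. Qed.

Lemma integral_sum (I : finType) (F : I -> K) :
  (forall i, integral v (F i)) -> integral v (\sum_i F i).
Proof. exact: inPO_sum. Qed.

Lemma integral_nat (b : bool) : integral v (b%:R).
Proof. by case: b; [exact: integral1|exact: inPO0]. Qed.

Lemma intmx_mul m n k (A : 'M[K]_(m, n)) (B : 'M[K]_(n, k)) :
  integral_mx v A -> integral_mx v B -> integral_mx v (A *m B).
Proof.
move=> hA hB i j; rewrite mxE; apply: integral_sum => l; exact: integralM.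
Qed.

Lemma intmx_add m n (A B : 'M[K]_(m, n)) :
  integral_mx v A -> integral_mx v B -> integral_mx v (A + B).
Proof. by move=> hA hB i j; rewrite mxE; apply: inPOD; [apply: hA|apply: hB]. Qed.

Lemma intmx_opp m n (A : 'M[K]_(m, n)) :
  integral_mx v A -> integral_mx v (- A).
Proof. move=> hA i j; rewrite mxE. exact: (inPON (hA i j)). Qed.

Lemma intmx1 n : integral_mx v (1%:M : 'M[K]_n).
Proof. by move=> i j; rewrite mxE; apply: integral_nat. Qed.

Lemma intmx_delta m n i0 j0 : integral_mx v (delta_mx i0 j0 : 'M[K]_(m, n)).
Proof. by move=> i j; rewrite mxE; apply: integral_nat. Qed.

Lemma intmx_rowsub m m' n (f : 'I_m' -> 'I_m) (A : 'M[K]_(m, n)) :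
  integral_mx v A -> integral_mx v (rowsub f A).
Proof. by move=> hA i j; rewrite mxE. Qed.

Lemma intmx_colsub m n n' (f : 'I_n' -> 'I_n) (A : 'M[K]_(m, n)) :
  integral_mx v A -> integral_mx v (colsub f A).
Proof. by move=> hA i j; rewrite mxE. Qed.

Lemma intmx_row m n i (A : 'M[K]_(m, n)) :
  integral_mx v A -> integral_mx v (row i A).
Proof. by move=> hA i' j; rewrite mxE. Qed.

Lemma unit_1_pH n (H : 'M[K]_n) : integral_mx v H ->
  (1%:M - pK K p *: H) \in unitmx.
Proof.
move=> hH; rewrite unitmxE unitfE; apply/negP => /det0P [x xn0 hx].
have [j0 hj0] : exists j, x 0 j != 0.
  apply/existsP; apply: contraR xn0 => /existsPn h; apply/eqP/matrixP => i j.
  by rewrite ord1 mxE; apply/eqP; apply: negbNE; apply: h.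
case: (@arg_minP _ _ _ j0 (fun i => x 0 i != 0) (fun i => v (x 0 i)) hj0) => i0 hi0 hmin.
set y := (x 0 i0)^-1 *: x.
have hy : y *m (1%:M - pK K p *: H) = 0 by rewrite /y -scalemxAl hx scaler0.
have yi0 : y 0 i0 = 1 by rewrite /y mxE mulVf.
have yint : integral_mx v y.
  move=> i j; rewrite ord1 /y mxE /integral /inPO.
  have [->|xj] := eqVneq (x 0 j) 0; first by rewrite mulr0 eqxx.
  rewrite mulf_eq0 invr_eq0 (negPf hi0) (negPf xj) /= vM ?invr_neq0 // vV //.
  by rewrite addrC subr_ge0; apply: hmin.
have e : y = pK K p *: (y *m H).
  by apply/eqP; rewrite -subr_eq0 scalemxAr -{1}(mulmx1 y) -mulmxBr hy.
have : inPO v 1 (y 0 i0).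
  rewrite e mxE; have := inPOM inPOp (intmx_mul yint hH 0 i0); by rewrite addr0.
by rewrite yi0 (negPf not_inPO1_1).
Qed.


Lemma sum_sel n (S : {set 'I_n}) (u : 'I_n -> K) l :
  \sum_(k < #|S|) u (enum_val k) * (1%:M : 'M[K]_n) (enum_val k) l
  = if l \in S then u l else 0.
Proof.
case: ifP => hl.
  rewrite (bigD1 (enum_rank_in hl l)) //= enum_rankK_in // mxE eqxx mulr1 big1 ?addr0 //.
  move=> k hk; rewrite mxE; case: eqP => e; last by rewrite mulr0.
  by case/eqP: hk; rewrite -{1}(enum_valK_in hl k) e.
apply: big1 => k _; rewrite mxE; case: eqP => e; last by rewrite mulr0.
by move: (enum_valP k); rewrite e hl.
Qed.

Definition Dg n (a : 'I_n -> int) : 'M[K]_n := diag_mx (\row_i (pK K p ^ (a i))).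

Lemma smith_count n (a b : 'I_n -> int) (Z X G : 'M[K]_n) (k : int) :
  integral_mx v Z -> integral_mx v X -> integral_mx v G -> Z *m X = 1%:M ->
  Z *m Dg a = Dg b *m G ->
  (#|[set i | (k <= b i)%R]| <= #|[set i | (k <= a i)%R]|)%N.
Proof.
move=> hZ hX hG ZX e.
set T := [set i | k <= b i]; set S := [set i | k <= a i].
have hZp : forall i l, k <= b i -> ~~ (k <= a l) -> inPO v 1 (Z i l).
  move=> i l hb ha.
  have := congr1 (fun M : 'M[K]_n => M i l) e; rewrite /Dg mul_mx_diag mul_diag_mx !mxE => e2.
  have h1 : inPO v k (pK K p ^ (a l) * Z i l).
    rewrite mulrC e2; apply: (inPOW (b := b i + 0)); first by rewrite addr0.
    exact: inPOM (inPOpz _) (hG _ _).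
  apply: (inPOW (b := k - a l)); last exact: inPOpzM h1.
  by move: ha; rewrite -ltNge; lia.
pose fT := fun i : 'I_#|T| => enum_val i.
pose fS := fun i : 'I_#|S| => enum_val i.
have fTi : injective fT by apply: enum_val_inj.
set R := rowsub fT Z.
set Q := rowsub fS (1%:M : 'M[K]_n).
set C := colsub fS R *m Q.
have RC : forall i l, (R - C) i l = if l \in S then 0 else R i l.
  move=> i l; rewrite !mxE.
  have -> : \sum_j colsub fS R i j * Q j l =
            \sum_(j < #|S|) R i (enum_val j) * (1%:M : 'M[K]_n) (enum_val j) l.
    by apply: eq_bigr => j _; rewrite !mxE.
  rewrite sum_sel; case: ifP => _; first by rewrite /R mxE subrr.
  by rewrite subr0.
set F := (pK K p)^-1 *: (R - C).
have Fint : integral_mx v F.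
  move=> i l; rewrite /F mxE RC; case: ifP => hl; first by rewrite mulr0; exact: inPO0.
  have := inPOM (inPOpz (-1)) (hZp (fT i) l _ _).
  rewrite exprN1 /R mxE addNr; apply.
    by have := enum_valP i; rewrite inE.
  by rewrite inE in hl; rewrite hl.
have RCF : R = C + pK K p *: F.
  by rewrite /F scalerA mulfV ?pK_neq0 // scale1r addrC subrK.
have RX : R *m X = rowsub fT (1%:M : 'M[K]_n).
  by rewrite /R rowsubE -mulmxA ZX -rowsubE.
have CX : colsub fT (C *m X) = 1%:M - pK K p *: colsub fT (F *m X).
  have -> : C *m X = rowsub fT (1%:M : 'M[K]_n) - pK K p *: (F *m X).
    by rewrite -RX RCF mulmxDl -scalemxAl addrK.
  rewrite -(colsub_sel K fTi).
  by apply/matrixP => i j; rewrite !mxE.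
have : \rank (colsub fT (C *m X)) = #|T|.
  rewrite CX mxrank_unit //; apply: unit_1_pH; apply: intmx_colsub.
  exact: intmx_mul.
move=> <-; apply: (leq_trans (rank_colsub _ _)).
apply: (leq_trans (mxrankM_maxl _ _)).
apply: (leq_trans (mxrankM_maxl _ _)).
exact: rank_leq_col.
Qed.


Variable d : nat.

Lemma basis_change (M : 'rV[K]_d -> Prop) W V :
  isZpBasis v M W -> isZpBasis v M V -> exists X, integral_mx v X /\ W = X *m V.
Proof.
move=> [Wu hW] [Vu hV].
have h : forall i, exists c : 'rV[K]_d, integral_mx v c /\ row i W = c *m V.
  move=> i; apply/hV/hW; exists (delta_mx 0 i); split; first exact: intmx_delta.
  exact: rowE.
have [c hc] := fin_all_exists h.
exists (\matrix_(i, j) c i 0 j); split.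
  by move=> i j; rewrite mxE; case: (hc i) => hi _; apply: hi.
apply/row_matrixP => i; rewrite row_mul; case: (hc i) => _ ->; congr (_ *m _).
by apply/rowP => j; rewrite !mxE.
Qed.

Lemma cancel_unit n (A B C : 'M[K]_n) : C \in unitmx -> A *m C = B *m C -> A = B.
Proof. by move=> Cu e; rewrite -(mulmxK Cu A) e mulmxK. Qed.

Lemma smith_mx (Phi : 'M[K]_d) (s : 'I_d -> int) (W W' : 'M[K]_d) :
  (forall i, row i W *m Phi = pK K p ^ (s i) *: row i W') -> W *m Phi = Dg s *m W'.
Proof.
move=> h; apply/row_matrixP => i; rewrite row_mul h /Dg mul_diag_mx.
by apply/rowP => j; rewrite !mxE.
Qed.

Lemma smith_half (M : 'rV[K]_d -> Prop) Phi s s' :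
  isSmith v p M Phi s -> isSmith v p M Phi s' ->
  forall k, (#|[set i | (k <= s' i)%R]| <= #|[set i | (k <= s i)%R]|)%N.
Proof.
move=> [_ [W [W' [hW hW' hs]]]] [_ [V [V' [hV hV' hs']]]] k.
have eW := smith_mx hs; have eV := smith_mx hs'.
have [X [Xi WX]] := basis_change hW hV.
have [X1 [X1i VX]] := basis_change hV hW.
have [Y [Yi WY]] := basis_change hW' hV'.
have [Y1 [Y1i VY]] := basis_change hV' hW'.
have X1X : X1 *m X = 1%:M.
  apply: (cancel_unit (C := V)); first by case: hV.
  by rewrite -mulmxA -WX -VX mul1mx.
have YY1 : Y *m Y1 = 1%:M.
  apply: (cancel_unit (C := W')); first by case: hW'.
  by rewrite -mulmxA -VY -WY mul1mx.
have e1 : Dg s *m Y = X *m Dg s'.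
  apply: (cancel_unit (C := V')); first by case: hV'.
  by rewrite -mulmxA -WY -eW WX -mulmxA eV mulmxA.
apply: (smith_count (Z := X1) (X := X) (G := Y1)) => //.
by rewrite -[X1 *m Dg s]mulmx1 -YY1 mulmxA -(mulmxA X1) e1 mulmxA X1X mul1mx.
Qed.

Lemma smith_uniq (M : 'rV[K]_d -> Prop) Phi s s' :
  isSmith v p M Phi s -> isSmith v p M Phi s' -> forall i, s' i = s i.
Proof.
move=> h h'; apply: sorted_eq; [by case: h|by case: h'|] => k.
by apply/eqP; rewrite eqn_leq (smith_half h h') (smith_half h' h).
Qed.


Definition B2 (B Phi : 'M[K]_d) (h : 'I_d -> int) : 'M[K]_d :=
  \matrix_(i < d) (pK K p ^ (- h i) *: (row i B *m Phi)).

Lemma pz_inv (n : int) : pK K p ^ n * pK K p ^ (- n) = 1.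
Proof. by rewrite -expfzDr ?pK_neq0 // subrr expr0z. Qed.

Lemma Dg_inv (h : 'I_d -> int) : Dg h *m Dg (fun i => - h i) = 1%:M.
Proof.
apply/matrixP => i j; rewrite /Dg mul_diag_mx !mxE.
by case: eqP => _; rewrite ?mulr1n ?mulr0n ?mulr0 // pz_inv.
Qed.

Lemma B2_eq (B Phi : 'M[K]_d) h : B2 B Phi h = Dg (fun i => - h i) *m (B *m Phi).
Proof.
apply/row_matrixP => i; rewrite /B2 rowK /Dg mul_diag_mx.
by rewrite -row_mul; apply/rowP => j; rewrite !mxE.
Qed.

Lemma tHT_map (B Phi : 'M[K]_d) h : B \in unitmx -> forall c : 'rV[K]_d,
  c *m B *m invmx (tHT_mx p B h) *m Phi = c *m B2 B Phi h.
Proof.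
move=> Bu c.
set U := invmx B *m Dg (fun i => - h i) *m B.
have TU : tHT_mx p B h *m U = 1%:M.
  rewrite /tHT_mx /U -!mulmxA (mulmxA B) mulmxV // mul1mx.
  by rewrite (mulmxA (Dg h)) Dg_inv mul1mx mulVmx.
have [Tu _] := mulmx1_unit TU.
have -> : invmx (tHT_mx p B h) = U by rewrite -[U]mul1mx -(mulVmx Tu) -mulmxA TU mulmx1.
by rewrite /U B2_eq !mulmxA mulmxK.
Qed.

Lemma image_equiv (M : 'rV[K]_d -> Prop) (B Phi : 'M[K]_d) h :
  isZpBasis v M B -> forall y,
  (exists x, M x /\ y = x *m invmx (tHT_mx p B h) *m Phi) <-> span_Zp v (B2 B Phi h) y.
Proof.
move=> [Bu hB] y; split.
  move=> [x [/hB [c [ci ->]] ->]]; exists c; split => //; exact: tHT_map.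
move=> [c [ci ->]]; exists (c *m B); split; last by rewrite tHT_map.
by apply/hB; exists c.
Qed.

End Val.

Unset Implicit Arguments.


Theorem mainTheorem7 (K : fieldType) (v : K -> int) (p : nat) (d : nat)
    (Phi : 'M[K]_d) (Fil : int -> 'M[K]_d) (M : 'rV[K]_d -> Prop) :
  is_Qp v p ->
  filtered_phi_module Phi Fil ->
  lattice v M ->
  strongly_divisible v p M Phi Fil <->
  exists B : 'M[K]_d, adapted v p M Phi Fil B /\
    exists h : 'I_d -> int, (forall i, tH Fil (row i B) (h i)) /\
      (forall y : 'rV[K]_d,
         M y <-> exists x, M x /\ y = x *m invmx (tHT_mx p B h) *m Phi).
Proof.
move=> hQ [Phiu hF] _; split.
  move=> [[B hBad] [s [t [hs ht est]]]].
  have hBad' := hBad.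
  move: hBad' => [[hB [s' [hs' hB2]]] [t' [ht' hBt]]].
  have Bu : B \in unitmx by case: hB.
  have e : forall i, s' i = t' i.
    move=> i; rewrite (smith_uniq hQ hs hs') (HT_uniq hF ht ht') -est //.
  exists B; split => //; exists t'; split.
    move=> i; split; first exact: hBt.
    move=> k hk; rewrite leNgt; apply/negP => lt.
    have := not_next hF ht' Bu hBt i; rewrite (submx_trans hk) //.
    by apply: fil_mono hF _ _ _; rewrite -[t' i + 1]/(t' i + 1)%R; lia.
  have hB2' : isZpBasis v M (B2 p B Phi t').
    suff -> : B2 p B Phi t' = \matrix_(i < d) (pK K p ^ (- s' i) *: (row i B *m Phi)) by [].
    by apply/row_matrixP => i; rewrite /B2 !rowK e.
  move=> y; rewrite (image_equiv hQ Phi t' hB y); exact: (proj2 hB2' y).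
move=> [B [hBad [h [htH himg]]]].
have hBad' := hBad.
move: hBad' => [[hB [s' [hs' hB2]]] [t' [ht' hBt]]].
have Bu : B \in unitmx by case: hB.
have e : forall i, h i = t' i.
  move=> i; case: (htH i) => hb hmax; have := hmax _ (hBt i) => le1.
  apply/eqP; rewrite eq_le le1 andbT; rewrite leNgt; apply/negP => lt.
  have := not_next hF ht' Bu hBt i; rewrite (submx_trans hb) //.
  by apply: fil_mono hF _ _ _; lia.
split; first by exists B.
exists t', t'; split => //.
split; first by case: ht'.
exists B, (B2 p B Phi h); split => //.
  split.
    rewrite B2_eq unitmx_mul; apply/andP; split; last by rewrite unitmx_mul Bu.
    by case: (mulmx1_unit (Dg_inv hQ h)).
  move=> y; rewrite himg; exact: image_equiv.
move=> i; rewrite /B2 rowK scalerA -e (pz_inv hQ) ?scale1r //.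
Qed.
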